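(* Let \(S\) be an inverse semigroup with zero and unit and let \(\mathcal G\) be an étale topological groupoid. Then algebraic morphisms \(\mathcal G(S)\curvearrowright\mathcal G\) correspond bijectively to (zero- and unit-preserving) inverse semigroup homomorphisms \(S\to\mathrm{Bis}(\mathcal G)\).
   Context: Inverse semigroups have zero and unit; homomorphisms preserve them. For \(S\), let \(E=E(S)\) be its idempotents, and \(\hat E\) the set of maps \(\varphi\colon E\to\{0,1\}\) with \(\varphi(0)=0\), \(\varphi(1)=1\), \(\varphi(ef)=\varphi(e)\varphi(f)\). Topologise \(\hat E\) by the sets \(U_e=\{\varphi:\varphi(e)=1\}\). \(S\) acts on \(\hat E\) by \(s\cdot\varphi(e)=\varphi(s^*es)\) for \(\varphi\in U_{s^*s}\). \(\mathcal G(S)\) is the groupoid of germs of this action. Objects are \(\hat E\). Arrows are classes \([s,\varphi]\) (\(s\in S\), \(\varphi\in U_{s^*s}\)), with \((s,\varphi)\sim(t,\psi)\) iff \(\varphi=\psi\) and \(se=te\) for some idempotent \(e\) with \(\varphi(e)=1\). The structure maps are \(\mathrm s[s,\varphi]=\varphi\), \(\mathrm r[s,\varphi]=s\cdot\varphi\), \([s,t\cdot\psi][t,\psi]=[st,\psi]\), with the topology generated by the sets \(\{[s,\varphi]:\varphi\in U\}\) for \(U\subseteq U_{s^*s}\) open. A bisection of a topological groupoid is an open subset of the arrow space on which range and source maps are injective and open. A groupoid is étale if its arrow space is covered by bisections. \(\mathrm{Bis}(\mathcal G)\) is the inverse semigroup of bisections, with \(s\cdot t=\{gh:g\in s,h\in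 t, \mathrm s(g)=\mathrm r(h)\}\) and \(s^*=\{g^{-1}:g\in s\}\). Its unit is \(\mathcal G^{(0)}\) and its zero is \(\emptyset\). An action of a groupoid \(\mathcal K\) on a space \(X\) is a continuous anchor \(\varrho\colon X\to\mathcal K^{(0)}\) and a continuous multiplication \((k,x)\mapsto k\cdot x\), defined when \(\mathrm s(k)=\varrho(x)\), with \(\varrho(k\cdot x)=\mathrm r(k)\), associativity when defined, and \(1_{\varrho(x)}\cdot x=x\). An algebraic morphism \(\mathcal K\curvearrowright\mathcal H\) is an action of \(\mathcal K\) on the arrow space \(\mathcal H^{(1)}\) that commutes with the right translation action of \(\mathcal H\) on \(\mathcal H^{(1)}\). That is, \(\varrho(hh')=\varrho(h)\) and \(k\cdot(hh')=(k\cdot h)h'\) whenever defined. *)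

(* Defs.v *)
From HB Require Import structures.
From mathcomp Require Import all_boot all_order all_algebra.
From mathcomp Require Import all_classical.
From mathcomp Require Import topology_structure product_topology initial_topology subtype_topology.

Set Implicit Arguments.
Unset Strict Implicit.
Unset Printing Implicit Defensive.
Local Open Scope classical_set_scope.

Record invSG := InvSG {
  isg_car :> Type;
  isg_mul : isg_car -> isg_car -> isg_car;
  isg_star : isg_car -> isg_car;
  isg_zero : isg_car;
  isg_one : isg_car;
  isg_mulA : forall x y z, isg_mul x (isg_mul y z) = isg_mul (isg_mul x y) z;
  isg_inv1 : forall s, isg_mul (isg_mul s (isg_star s)) s = s;
  isg_inv2 : forall s, isg_mul (isg_mul (isg_star s) s) (isg_star s) = isg_star s;
  isg_invU : forall s t, isg_mul (isg_mul s t) s = s ->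
                         isg_mul (isg_mul t s) t = t -> t = isg_star s;
  isg_mul0s : forall s, isg_mul isg_zero s = isg_zero;
  isg_muls0 : forall s, isg_mul s isg_zero = isg_zero;
  isg_mul1s : forall s, isg_mul isg_one s = s;
  isg_muls1 : forall s, isg_mul s isg_one = s
}.

Section InvSGTheory.
Variable S : invSG.
Local Notation m := (@isg_mul S).
Local Notation st := (@isg_star S).
Local Notation mA := (@isg_mulA S).

Lemma isg_starK (s : S) : st (st s) = s.
Proof. by symmetry; apply: isg_invU; [exact: isg_inv2 | exact: isg_inv1]. Qed.

Lemma isg_idem_star (e : S) : m e e = e -> st e = e.
Proof. by move=> He; symmetry; apply: isg_invU; rewrite !He. Qed.

Lemma isg_ss_idem (s : S) : m (m (st s) s) (m (st s) s) = m (st s) s.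
Proof. by rewrite mA isg_inv2. Qed.

Lemma isg_idem_r (e r : S) : m e e = e -> m e (m e r) = m e r.
Proof. by move=> He; rewrite mA He. Qed.

Lemma isg_inv1_r (s r : S) : m s (m (st s) (m s r)) = m s r.
Proof. by rewrite !mA isg_inv1. Qed.

Lemma isg_inv2_r (s r : S) : m (st s) (m s (m (st s) r)) = m (st s) r.
Proof. by rewrite !mA isg_inv2. Qed.

Lemma isg_idem_mul (e f : S) : m e e = e -> m f f = f -> m (m e f) (m e f) = m e f.
Proof.
move=> He Hf; set x := st (m e f).
have I1 : m e (m f (m x (m e f))) = m e f.
  by rewrite [m e (m f _)]mA mA isg_inv1.
have I2 : forall r, m x (m e (m f (m x r))) = m x r.
  by move=> r; rewrite [m e (m f _)]mA isg_inv2_r.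
have Hx : m (m f x) e = x.
  apply: isg_invU.
    by rewrite -!mA (isg_idem_r _ Hf) (isg_idem_r _ He) I1.
  by rewrite -!mA (isg_idem_r _ He) (isg_idem_r _ Hf) I2.
have Hxx : m x x = x.
  by rewrite -{1}Hx -{2}Hx -!mA I2 !mA Hx.
have := isg_idem_star Hxx; rewrite /x isg_starK => ->.
by rewrite -/x.
Qed.

Lemma isg_idem_comm (e f : S) : m e e = e -> m f f = f -> m e f = m f e.
Proof.
move=> He Hf; have Hef := isg_idem_mul He Hf.
have -> : m f e = st (m e f).
  apply: isg_invU.
    by rewrite -!mA (isg_idem_r _ Hf) (isg_idem_r _ He) [m e (m f _)]mA Hef.
  by rewrite -!mA (isg_idem_r _ He) (isg_idem_r _ Hf) [m f (m e _)]mA (isg_idem_mul Hf He).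
by rewrite isg_idem_star.
Qed.

Lemma isg_sst_idem (s : S) : m (m s (st s)) (m s (st s)) = m s (st s).
Proof. by rewrite mA isg_inv1. Qed.

Lemma isg_conj_idem (s e : S) : m e e = e ->
  m (m (st s) (m e s)) (m (st s) (m e s)) = m (st s) (m e s).
Proof.
move=> He; have Hp := isg_sst_idem s.
have Hc := isg_idem_comm He Hp.
rewrite -!mA [m s (m (st s) _)]mA [m e (m (m s (st s)) _)]mA Hc -mA (isg_idem_r _ He).
by rewrite [m (st s) (m (m s (st s)) _)]mA [m (st s) (m s (st s))]mA isg_inv2.
Qed.

Lemma isg_one_idem : m (isg_one S) (isg_one S) = isg_one S.
Proof. exact: isg_mul1s. Qed.

Lemma isg_star1 : st (isg_one S) = isg_one S.
Proof. exact: isg_idem_star isg_one_idem. Qed.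

Lemma isg_conj_mul (s e f : S) : m e e = e -> m f f = f ->
  m (st s) (m (m e f) s) = m (m (st s) (m e s)) (m (st s) (m f s)).
Proof.
move=> He Hf; have Hp := isg_sst_idem s.
have Hc := isg_idem_comm Hf Hp.
rewrite -!mA [m s (m (st s) _)]mA [m (m s (st s)) (m f s)]mA -Hc -mA.
by rewrite [m (m s (st s)) s]isg_inv1.
Qed.

End InvSGTheory.

Definition gen_open (T : Type) (B : set_system T) : set_system T :=
  fun U => forall O : set_system T, O setT -> setI_closed O ->
    (forall (I : Type) (f : I -> set T), (forall i, O (f i)) -> O (\bigcup_i f i)) ->
    B `<=` O -> O U.

Lemma gen_openT T (B : set_system T) : gen_open B setT.
Proof. by move=> O OT. Qed.

Lemma gen_openI T (B : set_system T) : setI_closed (gen_open B).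
Proof. move=> U V HU HV O OT OI OU OB; exact: OI (HU O OT OI OU OB) (HV O OT OI OU OB). Qed.

Lemma gen_open_bigU T (B : set_system T) (I : Type) (f : I -> set T) :
  (forall i, gen_open B (f i)) -> gen_open B (\bigcup_i f i).
Proof. move=> Hf O OT OI OU OB; apply: (OU) => i; exact: Hf i O OT OI OU OB. Qed.

Section Germs.
Variable S : invSG.
Local Notation m := (@isg_mul S).
Local Notation st := (@isg_star S).

Definition Idem : Type := {e : S | m e e = e}.

Definition is_char (phi : Idem -> bool) : Prop :=
  [/\ forall z : Idem, sval z = isg_zero S -> phi z = false,
      forall u : Idem, sval u = isg_one S -> phi u = true &
      forall e f g : Idem, sval g = m (sval e) (sval f) -> phi g = phi e && phi f].

Definition Ehat : Type := {phi : Idem -> bool | is_char phi}.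
HB.instance Definition _ := gen_eqMixin Ehat.
HB.instance Definition _ := gen_choiceMixin Ehat.

Definition char_at (phi : Ehat) (e : Idem) : bool := sval phi e.

Definition Uset (e : Idem) : set Ehat := [set phi | char_at phi e].

Definition Ehat_gens : set_system Ehat := [set U | exists e, U = Uset e].
HB.instance Definition _ := isOpenTopological.Build Ehat
  (@gen_openT _ Ehat_gens) (@gen_openI _ Ehat_gens) (@gen_open_bigU _ Ehat_gens).

Definition ssE (s : S) : Idem := exist _ (m (st s) s) (isg_ss_idem s).
Definition oneE : Idem := exist _ (isg_one S) (@isg_one_idem S).
Definition conjE (s : S) (e : Idem) : Idem :=
  exist _ (m (st s) (m (sval e) s)) (isg_conj_idem s (proj2_sig e)).

Lemma char_val (phi : Ehat) (a b : Idem) : sval a = sval b -> char_at phi a = char_at phi b.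
Proof.
case: phi => phi [_ H1 HM] /= Hab.
have -> : phi a = phi b && phi oneE by apply: HM; rewrite /= Hab isg_muls1.
by rewrite (H1 oneE erefl) andbT.
Qed.

Lemma germ_act_char (s : S) (phi : Ehat) : char_at phi (ssE s) ->
  is_char (fun e => char_at phi (conjE s e)).
Proof.
move=> Hs; case: (proj2_sig phi) => H0 H1 HM; split.
- move=> z Hz; apply: H0 => /=; by rewrite Hz isg_mul0s isg_muls0.
- by move=> u Hu; rewrite -Hs; apply: char_val => /=; rewrite Hu isg_mul1s.
- move=> e f g Hg; apply: HM => /=; rewrite Hg; exact: isg_conj_mul (proj2_sig e) (proj2_sig f).
Qed.

Definition germ_act (s : S) (phi : Ehat) (H : char_at phi (ssE s)) : Ehat :=
  exist _ _ (germ_act_char H).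

Definition GP : Type := {p : (S * Ehat)%type | char_at p.2 (ssE p.1)}.

Definition germ_rel (p q : GP) : Prop :=
  (sval p).2 = (sval q).2 /\
  exists e : Idem, char_at (sval p).2 e /\ m (sval p).1 (sval e) = m (sval q).1 (sval e).

Definition GArr : Type := {A : set GP | exists p, A = germ_rel p}.
HB.instance Definition _ := gen_eqMixin GArr.
HB.instance Definition _ := gen_choiceMixin GArr.

Definition germ (p : GP) : GArr := exist _ (germ_rel p) (ex_intro _ p erefl).
Definition germ' (s : S) (phi : Ehat) (H : char_at phi (ssE s)) : GArr :=
  germ (exist (fun p : (S * Ehat)%type => char_at p.2 (ssE p.1)) (s, phi) H).

Definition grep (g : GArr) : GP := projT1 (cid (proj2_sig g)).

Definition Gsrc (g : GArr) : Ehat := (sval (grep g)).2.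
Definition Grng (g : GArr) : Ehat := germ_act (proj2_sig (grep g)).

Lemma unit_ok (phi : Ehat) : char_at phi (ssE (isg_one S)).
Proof.
case: (proj2_sig phi) => _ H1 _; apply: H1 => /=.
by rewrite isg_star1 isg_mul1s.
Qed.
Definition Gunit (phi : Ehat) : GArr := germ' (unit_ok phi).

(* [s, t.psi] [t, psi] = [st, psi]; the value on non-composable pairs is
   irrelevant (an arbitrary default). *)
Definition Gmul (g h : GArr) : GArr :=
  match pselect (char_at (sval (grep h)).2 (ssE (m (sval (grep g)).1 (sval (grep h)).1))) with
  | left H => germ' H
  | right _ => h
  end.

Lemma inv_ok (s : S) (phi : Ehat) (H : char_at phi (ssE s)) :
  char_at (germ_act H) (ssE (st s)).
Proof.
have -> : char_at (germ_act H) (ssE (st s)) = char_at phi (conjE s (ssE (st s))) by [].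
by rewrite (char_val phi (b := ssE s)) //= isg_starK isg_inv1.
Qed.
Definition Ginv (g : GArr) : GArr := germ' (inv_ok (proj2_sig (grep g))).

Definition GArr_basic : set_system GArr :=
  [set W | exists (s : S) (U : set Ehat), [/\ open U, U `<=` Uset (ssE s) &
     W = [set g | exists phi (H : char_at phi (ssE s)), U phi /\ g = germ' H]]].
HB.instance Definition _ := isOpenTopological.Build GArr
  (@gen_openT _ GArr_basic) (@gen_openI _ GArr_basic) (@gen_open_bigU _ GArr_basic).

End Germs.

Record gpd := Gpd {
  gObj : topologicalType;
  gArr : topologicalType;
  gsrc : gArr -> gObj;
  grng : gArr -> gObj;
  gunit : gObj -> gArr;
  gmul : gArr -> gArr -> gArr;
  ginv : gArr -> gArr
}.

Definition composable (G : gpd) : set (gArr G * gArr G) :=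
  [set p | gsrc p.1 = grng p.2].

Definition is_top_groupoid (G : gpd) : Prop :=
  [/\ (forall x : gObj G, gsrc (gunit x) = x /\ grng (gunit x) = x) /\
      (forall g h : gArr G, gsrc g = grng h ->
         gsrc (gmul g h) = gsrc h /\ grng (gmul g h) = grng g),
      (forall g h k : gArr G, gsrc g = grng h -> gsrc h = grng k ->
         gmul (gmul g h) k = gmul g (gmul h k)),
      (forall g : gArr G, gmul (gunit (grng g)) g = g /\ gmul g (gunit (gsrc g)) = g),
      (forall g : gArr G, [/\ gsrc (ginv g) = grng g, grng (ginv g) = gsrc g,
         gmul g (ginv g) = gunit (grng g) & gmul (ginv g) g = gunit (gsrc g)]) &
      [/\ continuous (@gsrc G), continuous (@grng G), continuous (@gunit G),
          continuous (@ginv G) &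
          continuous (fun p : @composable G => gmul (sval p).1 (sval p).2)]].

Definition bisection (G : gpd) (U : set (gArr G)) : Prop :=
  [/\ open U,
      (forall g h : gArr G, U g -> U h -> gsrc g = gsrc h -> g = h),
      (forall g h : gArr G, U g -> U h -> grng g = grng h -> g = h),
      (forall V : set (gArr G), open V -> V `<=` U -> open (@gsrc G @` V)) &
      (forall V : set (gArr G), open V -> V `<=` U -> open (@grng G @` V))].

Definition etale (G : gpd) : Prop :=
  forall g : gArr G, exists U, bisection U /\ U g.

Definition bis_mul (G : gpd) (U V : set (gArr G)) : set (gArr G) :=
  [set z | exists g h, [/\ U g, V h, gsrc g = grng h & z = gmul g h]].
Definition bis_unit (G : gpd) : set (gArr G) := range (@gunit G).

Definition is_bis_hom (S : invSG) (G : gpd) (theta : S -> set (gArr G)) : Prop :=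
  [/\ forall s, bisection (theta s),
      forall s t, theta (isg_mul s t) = bis_mul (theta s) (theta t),
      theta (isg_zero S) = set0 &
      theta (isg_one S) = @bis_unit G].

(* Algebraic morphisms K ~> H: actions of K on the arrow space of H    *)
(* commuting with the right translation action of H on its arrows.     *)
Definition act_dom (K H : gpd) (rho : gArr H -> gObj K) : set (gArr K * gArr H) :=
  [set p | gsrc p.1 = rho p.2].

Record alg_morph (K H : gpd) := AlgMorph {
  am_rho : gArr H -> gObj K;
  am_act : act_dom am_rho -> gArr H;
  am_rho_cont : continuous am_rho;
  am_act_cont : continuous am_act;
  am_rho_act : forall p : act_dom am_rho, am_rho (am_act p) = grng (sval p).1;
  am_assoc : forall k k' x (H1 : (k', x) \in act_dom am_rho)
      (H2 : (k, am_act (exist _ (k', x) H1)) \in act_dom am_rho)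
      (H3 : (gmul k k', x) \in act_dom am_rho),
      am_act (exist _ (k, am_act (exist _ (k', x) H1)) H2) =
      am_act (exist _ (gmul k k', x) H3);
  am_unit : forall x (H1 : (gunit (am_rho x), x) \in act_dom am_rho),
      am_act (exist _ (gunit (am_rho x), x) H1) = x;
  am_rho_mul : forall h h' : gArr H, gsrc h = grng h' ->
      am_rho (gmul h h') = am_rho h;
  am_act_mul : forall (k : gArr K) (h h' : gArr H) (Hc : gsrc h = grng h')
      (H1 : (k, h) \in act_dom am_rho) (H2 : (k, gmul h h') \in act_dom am_rho),
      gsrc (am_act (exist _ (k, h) H1)) = grng h' /\
      am_act (exist _ (k, gmul h h') H2) = gmul (am_act (exist _ (k, h) H1)) h'
}.

Definition germ_gpd (S : invSG) : gpd :=
  @Gpd (Ehat S) (GArr S) (@Gsrc S) (@Grng S) (@Gunit S) (@Gmul S) (@Ginv S).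

Definition corresponds (S : invSG) (G : gpd) (a : alg_morph (germ_gpd S) G)
  (theta : S -> set (gArr G)) : Prop :=
  forall (s : S) (g : gArr G),
    theta s g <->
    exists (x : gObj G) (Hx : char_at (am_rho a (gunit x)) (ssE s))
           (Hd : (germ' Hx : gArr (germ_gpd S), gunit x) \in act_dom (am_rho a)),
      g = am_act (exist _ (germ' Hx : gArr (germ_gpd S), gunit x) Hd).

(* Main.v *)
Require Import Defs.
From HB Require Import structures.
From mathcomp Require Import all_boot all_order all_algebra.
From mathcomp Require Import all_classical.
From mathcomp Require Import topology_structure product_topology initial_topology subtype_topology.


Set Implicit Arguments.
Unset Strict Implicit.
Unset Printing Implicit Defensive.
Local Open Scope classical_set_scope.

Lemma open_local (T : topologicalType) (A : set T) :
  (forall x, A x -> exists N : set T, [/\ open N, N x & N `<=` A]) -> open A.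
Proof.
move=> H; rewrite openE => x Ax; have [N [No Nx NA]] := H x Ax.
rewrite /interior nbhsE; exists N => //; by rewrite open_nbhsE; split => //; apply: open_nbhs_nbhs; split.
Qed.

Lemma open_setX (T U : topologicalType) (A : set T) (B : set U) :
  open A -> open B -> open (A `*` B).
Proof.
move=> Ao Bo; rewrite openE => -[x y] [/= Ax By].
rewrite /interior; exists (A, B) => //; split => /=;
  apply: open_nbhs_nbhs; split => //.
Qed.

Lemma open_sub_preimage (T : topologicalType) (D : set T) (Z : set T) :
  open Z -> open (set_val @^-1` Z : set (set_type D)).
Proof.
move=> Zo; have := @initial_continuous _ T (@set_val T D).
by move/continuousP => /(_ Z Zo).
Qed.

Lemma open_sub_inv (T : topologicalType) (D : set T) (W : set (set_type D)) :
  open W -> exists2 Z : set T, open Z & W = set_val @^-1` Z.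
Proof. by move=> [Z Zo <-]; exists Z. Qed.

Lemma cont_extract (T U V : topologicalType) (D : set (T * U))
  (f : set_type D -> V) : continuous f ->
  forall (p : set_type D) (O : set V), open O -> O (f p) ->
  exists A B, [/\ open A, open B, A (sval p).1, B (sval p).2 &
     forall q : set_type D, A (sval q).1 -> B (sval q).2 -> O (f q)].
Proof.
move=> /continuousP fc p O Oo Ofp.
have [Z Zo E] := open_sub_inv (fc O Oo).
have Zp : Z (sval p) by have : (f @^-1` O) p by []; rewrite E.
have : nbhs (sval p) Z by apply: open_nbhs_nbhs; split.
move=> [[A B] /= [nA nB] sAB].
have [A' [A'o A'p] A'A] : exists2 A', open_nbhs (sval p).1 A' & A' `<=` A by move: nA; rewrite nbhsE.
have [B' [B'o B'p] B'B] : exists2 B', open_nbhs (sval p).2 B' & B' `<=` B by move: nB; rewrite nbhsE.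
exists A', B'; split => // q qA qB.
have : (set_val @^-1` Z) q by apply: sAB; split; [apply: A'A | apply: B'B].
by rewrite -E.
Qed.


Set Implicit Arguments.
Unset Strict Implicit.
Unset Printing Implicit Defensive.
Local Open Scope classical_set_scope.

Section Gpd.
Variable G : gpd.
Hypothesis HG : is_top_groupoid G.
Local Notation src := (@gsrc G).
Local Notation rng := (@grng G).
Local Notation u := (@gunit G).
Local Notation mul := (@gmul G).
Local Notation inv := (@ginv G).

Lemma g_src_u x : src (u x) = x. Proof. by case: HG => [[H _] _ _ _ _]; case: (H x). Qed.
Lemma g_rng_u x : rng (u x) = x. Proof. by case: HG => [[H _] _ _ _ _]; case: (H x). Qed.
Lemma g_src_mul g h : src g = rng h -> src (mul g h) = src h.
Proof. by case: HG => [[_ H] _ _ _ _] /H []. Qed.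
Lemma g_rng_mul g h : src g = rng h -> rng (mul g h) = rng g.
Proof. by case: HG => [[_ H] _ _ _ _] /H []. Qed.
Lemma g_mulA g h k : src g = rng h -> src h = rng k -> mul (mul g h) k = mul g (mul h k).
Proof. by case: HG => [_ H _ _ _]; apply: H. Qed.
Lemma g_mul1g g : mul (u (rng g)) g = g. Proof. by case: HG => [_ _ H _ _]; case: (H g). Qed.
Lemma g_mulg1 g : mul g (u (src g)) = g. Proof. by case: HG => [_ _ H _ _]; case: (H g). Qed.
Lemma g_src_inv g : src (inv g) = rng g. Proof. by case: HG => [_ _ _ H _]; case: (H g). Qed.
Lemma g_rng_inv g : rng (inv g) = src g. Proof. by case: HG => [_ _ _ H _]; case: (H g). Qed.
Lemma g_mulgV g : mul g (inv g) = u (rng g). Proof. by case: HG => [_ _ _ H _]; case: (H g). Qed.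
Lemma g_mulVg g : mul (inv g) g = u (src g). Proof. by case: HG => [_ _ _ H _]; case: (H g). Qed.
Lemma g_cont_src : continuous src. Proof. by case: HG => [_ _ _ _ []]. Qed.
Lemma g_cont_rng : continuous rng. Proof. by case: HG => [_ _ _ _ []]. Qed.
Lemma g_cont_u : continuous u. Proof. by case: HG => [_ _ _ _ []]. Qed.
Lemma g_cont_mul : continuous (fun p : @composable G => mul (sval p).1 (sval p).2).
Proof. by case: HG => [_ _ _ _ []]. Qed.

Lemma g_mulu x : mul (u x) (u x) = u x.
Proof. by have := g_mul1g (u x); rewrite g_rng_u. Qed.

Lemma g_cancel_l g h h' : src g = rng h -> src g = rng h' -> mul g h = mul g h' -> h = h'.
Proof.
move=> H1 H2 E.
have e1 : mul (inv g) (mul g h) = h.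
  by rewrite -g_mulA ?g_src_inv ?g_rng_inv // g_mulVg H1 g_mul1g.
have e2 : mul (inv g) (mul g h') = h'.
  by rewrite -g_mulA ?g_src_inv ?g_rng_inv // g_mulVg H2 g_mul1g.
by rewrite -e1 E e2.
Qed.

Lemma g_cancel_r g h h' : src h = rng g -> src h' = rng g -> mul h g = mul h' g -> h = h'.
Proof.
move=> H1 H2 E.
have e1 : mul (mul h g) (inv g) = h.
  by rewrite g_mulA ?g_src_inv ?g_rng_inv // g_mulgV -H1 g_mulg1.
have e2 : mul (mul h' g) (inv g) = h'.
  by rewrite g_mulA ?g_src_inv ?g_rng_inv // g_mulgV -H2 g_mulg1.
by rewrite -e1 E e2.
Qed.

Lemma g_left_unit a k : src a = rng k -> mul a k = k -> a = u (rng k).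
Proof.
move=> H E; apply: (@g_cancel_r k) => //; first by rewrite g_src_u.
by rewrite g_mul1g.
Qed.

Lemma g_inv_uniq g b : src g = rng b -> src (mul g b) = rng g ->
  mul (mul g b) g = g -> b = inv g.
Proof.
move=> H1 H2 E.
have gb : mul g b = u (rng g).
  apply: (@g_cancel_r g) => //; first by rewrite g_src_u.
  by rewrite g_mul1g.
apply: (@g_cancel_l g) => //; first by rewrite g_rng_inv.
by rewrite gb g_mulgV.
Qed.

Lemma g_src_rng_u x y : u x = u y -> x = y.
Proof. by move=> E; rewrite -(g_src_u x) E g_src_u. Qed.

Hypothesis HE : etale G.

Lemma etale_src_open (V : set (gArr G)) : open V -> open (src @` V).
Proof.
move=> Vo; apply: open_local => _ [g Vg <-].
have [B [[Bo _ _ Bs _] Bg]] := HE g.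
exists (src @` (V `&` B)); split.
- by apply: Bs; [apply: openI | move=> ? []].
- by exists g.
- by move=> _ [h [Vh _] <-]; exists h.
Qed.

Lemma etale_rng_open (V : set (gArr G)) : open V -> open (rng @` V).
Proof.
move=> Vo; apply: open_local => _ [g Vg <-].
have [B [[Bo _ _ _ Br] Bg]] := HE g.
exists (rng @` (V `&` B)); split.
- by apply: Br; [apply: openI | move=> ? []].
- by exists g.
- by move=> _ [h [Vh _] <-]; exists h.
Qed.

Lemma bisectionP (U : set (gArr G)) : open U ->
  (forall g h, U g -> U h -> src g = src h -> g = h) ->
  (forall g h, U g -> U h -> rng g = rng h -> g = h) -> bisection U.
Proof.
move=> Uo Hs Hr; split => // V Vo _; [exact: etale_src_open | exact: etale_rng_open].
Qed.

End Gpd.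


Set Implicit Arguments.
Unset Strict Implicit.
Unset Printing Implicit Defensive.
Local Open Scope classical_set_scope.

Section Alg.
Variable S : invSG.
Local Notation m := (@isg_mul S).
Local Notation st := (@isg_star S).
Local Notation mA := (@isg_mulA S).

Lemma inv1r (s : S) : m s (m (st s) s) = s.
Proof. by rewrite mA isg_inv1. Qed.
Lemma inv2r (s : S) : m (st s) (m s (st s)) = st s.
Proof. by rewrite mA isg_inv2. Qed.

Lemma star_mul (a b : S) : st (m a b) = m (st b) (st a).
Proof.
have C := isg_idem_comm (isg_sst_idem b) (isg_ss_idem a).
symmetry; apply: isg_invU.
  have -> : m (m (m a b) (m (st b) (st a))) (m a b) =
            m a (m (m (m b (st b)) (m (st a) a)) b) by rewrite !mA.
  by rewrite C -!mA isg_inv1_r inv1r.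
have -> : m (m (m (st b) (st a)) (m a b)) (m (st b) (st a)) =
          m (st b) (m (m (m (st a) a) (m b (st b))) (st a)) by rewrite !mA.
by rewrite -C -!mA isg_inv2_r inv2r.
Qed.

Lemma ss_mul (s t : S) : m (st (m s t)) (m s t) = m (st t) (m (m (st s) s) t).
Proof. by rewrite star_mul -!mA. Qed.

Lemma conj_e (s e f : S) : m e e = e -> m f f = f ->
  m (st (m s e)) (m f (m s e)) = m (m (st s) (m f s)) e.
Proof.
move=> He Hf; rewrite star_mul (isg_idem_star He).
have Ic := isg_conj_idem s Hf.
have C := isg_idem_comm He Ic.
have -> : m (m e (st s)) (m f (m s e)) = m (m e (m (st s) (m f s))) e by rewrite !mA.
by rewrite C -mA He.
Qed.

Lemma trans_alg (s t v e e' : S) : m e e = e -> m e' e' = e' ->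
  m s e = m t e -> m t e' = m v e' -> m s (m e e') = m v (m e e').
Proof.
move=> He He' E1 E2.
by rewrite mA E1 -mA (isg_idem_comm He He') mA E2 -mA.
Qed.

Lemma gmul_alg (s s0 t t0 e e' : S) : m e e = e -> m e' e' = e' ->
  m s0 e = m s e -> m t0 e' = m t e' ->
  m (m s0 t0) (m (m (st t) (m e t)) e') = m (m s t) (m (m (st t) (m e t)) e').
Proof.
move=> He He' E1 E2.
set f0 := m (st t) (m e t).
have Hf0 : m f0 f0 = f0 by apply: isg_conj_idem.
have K : forall r, m r (m t f0) = m (m r e) t.
  move=> r; rewrite /f0.
  have C := isg_idem_comm He (isg_sst_idem t).
  by rewrite mA -[m (m r t) _]mA [m t (m (st t) _)]mA [m (m t (st t)) _]mA -C -!mA inv1r !mA.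
have C' := isg_idem_comm Hf0 He'.
have L1 : m (m s0 t) f0 = m (m s t) f0.
  by rewrite -mA K E1 -K mA.
transitivity (m (m (m s0 t) f0) e').
  rewrite C' mA -[m s0 t0]/(m s0 t0) -(mA s0 t0 e') E2.
  by rewrite mA -mA -C' mA.
by rewrite L1 -mA.
Qed.

Lemma conj_inv_alg (s e : S) : m e e = e ->
  m (st s) (m (m s (m e (st s))) s) = m e (m (st s) s).
Proof.
move=> He; have C := isg_idem_comm He (isg_ss_idem s).
have -> : m (st s) (m (m s (m e (st s))) s) = m (m (m (st s) s) e) (m (st s) s) by rewrite !mA.
by rewrite -C -mA isg_ss_idem.
Qed.

Lemma conj_le_alg (t e : S) : m e e = e ->
  m (m (st t) (m e t)) (m (st t) t) = m (st t) (m e t).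
Proof. by move=> He; rewrite -!mA inv1r. Qed.

Lemma conj2_alg (s e : S) : m e e = e ->
  m s (m (m (st s) (m e s)) (st s)) = m e (m s (st s)).
Proof.
move=> He; have C := isg_idem_comm He (isg_sst_idem s).
have -> : m s (m (m (st s) (m e s)) (st s)) = m (m (m s (st s)) e) (m s (st s)) by rewrite !mA.
by rewrite -C -mA isg_sst_idem.
Qed.

End Alg.

Section GermTh.
Variable S : invSG.
Local Notation m := (@isg_mul S).
Local Notation st := (@isg_star S).
Local Notation mA := (@isg_mulA S).

Lemma char_mulE (phi : Ehat S) (e f g : Idem S) : sval g = m (sval e) (sval f) ->
  char_at phi g = char_at phi e && char_at phi f.
Proof. by case: phi => phi [_ _ HM] /=; apply: HM. Qed.

Lemma char_zero (phi : Ehat S) (z : Idem S) : sval z = isg_zero S -> char_at phi z = false.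
Proof. by case: phi => phi [H0 _ _] /=; apply: H0. Qed.

Lemma char_one (phi : Ehat S) (z : Idem S) : sval z = isg_one S -> char_at phi z = true.
Proof. by case: phi => phi [_ H1 _] /=; apply: H1. Qed.

Lemma Ehat_eq (phi psi : Ehat S) : (forall e, char_at phi e = char_at psi e) -> phi = psi.
Proof. case: phi psi => [f Hf] [g Hg] /= E; apply: eq_exist; apply: funext => e; exact: E. Qed.

Definition mulI (e f : Idem S) : Idem S :=
  exist _ (m (sval e) (sval f)) (isg_idem_mul (proj2_sig e) (proj2_sig f)).

Lemma char_mulI (phi : Ehat S) e f : char_at phi (mulI e f) = char_at phi e && char_at phi f.
Proof. exact: char_mulE. Qed.

Definition mkGP (s : S) (phi : Ehat S) (H : char_at phi (ssE s)) : GP S :=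
  exist (fun p : (S * Ehat S)%type => char_at p.2 (ssE p.1)) (s, phi) H.

Lemma grel_refl (p : GP S) : germ_rel p p.
Proof. by split => //; exists (oneE S); split => //; apply: char_one. Qed.

Lemma grel_sym (p q : GP S) : germ_rel p q -> germ_rel q p.
Proof. by move=> [E [e [He Hm]]]; split => //; exists e; rewrite -E. Qed.

Lemma grel_trans (p q r : GP S) : germ_rel p q -> germ_rel q r -> germ_rel p r.
Proof.
move=> [E1 [e [He H1]]] [E2 [e' [He' H2]]]; split; first by rewrite E1.
exists (mulI e e'); split; first by rewrite char_mulI He E1 He'.
by apply: trans_alg H1 H2; [exact: (proj2_sig e) | exact: (proj2_sig e')].
Qed.

Lemma germ_eq (p q : GP S) : germ_rel p q -> germ p = germ q.
Proof.
move=> H; apply: eq_exist; apply: funext => r; apply: propext; split.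
  by apply: grel_trans; apply: grel_sym.
exact: grel_trans.
Qed.

Lemma germ_eqE (p q : GP S) : germ p = germ q -> germ_rel p q.
Proof.
move/(congr1 sval) => /= E.
have : germ_rel q q := grel_refl q.
by rewrite -E.
Qed.

Lemma grep_spec (g : GArr S) : germ (grep g) = g.
Proof.
case: g => A HA; rewrite /grep /=; case: cid => p Hp /=.
by apply: eq_exist; rewrite Hp.
Qed.

Lemma grep_rel (p : GP S) : germ_rel (grep (germ p)) p.
Proof. exact: germ_eqE (grep_spec _). Qed.

Lemma Gsrc_germ (p : GP S) : Gsrc (germ p) = (sval p).2.
Proof. by case: (grep_rel p). Qed.

Lemma germ_act_wd (p q : GP S) : germ_rel p q ->
  germ_act (proj2_sig p) = germ_act (proj2_sig q).
Proof.
case: p q => [[s phi] H] [[t psi] H'] [/= E [e [He Hm]]]; subst psi.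
apply: Ehat_eq => f /=.
have K : forall v : S, char_at phi (conjE v f) = char_at phi (mulI (conjE v f) e)
   -> char_at phi (conjE v f) = char_at phi (conjE (m v (sval e)) f).
  move=> v ->; apply: char_val => /=.
  by rewrite (conj_e _ (proj2_sig e) (proj2_sig f)).
rewrite K; last by rewrite char_mulI He andbT.
by rewrite Hm -K // char_mulI He andbT.
Qed.

Lemma Grng_germ (p : GP S) : Grng (germ p) = germ_act (proj2_sig p).
Proof. by rewrite /Grng; apply: germ_act_wd; apply: grep_rel. Qed.

Lemma Gsrc_germ' (s : S) phi (H : char_at phi (ssE s)) : Gsrc (germ' H) = phi.
Proof. exact: (Gsrc_germ (mkGP H)). Qed.

Lemma Grng_germ' (s : S) phi (H : char_at phi (ssE s)) : Grng (germ' H) = germ_act H.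
Proof. exact: (Grng_germ (mkGP H)). Qed.

Lemma germ'_eqI (s t : S) (phi : Ehat S) (Hs : char_at phi (ssE s))
  (Ht : char_at phi (ssE t)) (e : Idem S) :
  char_at phi e -> m s (sval e) = m t (sval e) -> germ' Hs = germ' Ht.
Proof. by move=> He Hm; apply: germ_eq; split => //; exists e. Qed.

Lemma germ'_ext (s : S) (phi phi' : Ehat S) (Hs : char_at phi (ssE s))
  (Hs' : char_at phi' (ssE s)) : phi = phi' -> germ' Hs = germ' Hs'.
Proof. by move=> E; subst phi'; rewrite (Prop_irrelevance Hs Hs'). Qed.

Lemma germ'_ext2 (s s' : S) (phi phi' : Ehat S) (Hs : char_at phi (ssE s))
  (Hs' : char_at phi' (ssE s')) : s = s' -> phi = phi' -> germ' Hs = germ' Hs'.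
Proof. by move=> E E'; subst s' phi'; rewrite (Prop_irrelevance Hs Hs'). Qed.

Lemma germ'_idem (e : Idem S) (phi : Ehat S) (H : char_at phi (ssE (sval e))) :
  char_at phi e -> germ' H = Gunit phi.
Proof.
move=> He; rewrite /Gunit; eapply germ'_eqI; first exact: He.
by rewrite isg_mul1s (proj2_sig e).
Qed.

Lemma germ_comp (s t : S) (psi : Ehat S) (Ht : char_at psi (ssE t)) :
  char_at psi (ssE (m s t)) = char_at (germ_act Ht) (ssE s).
Proof. by apply: char_val => /=; rewrite ss_mul. Qed.

Lemma Gmul_germ' (s t : S) (psi : Ehat S) (Ht : char_at psi (ssE t))
  (Hs : char_at (germ_act Ht) (ssE s)) (Hst : char_at psi (ssE (m s t))) :
  Gmul (germ' Hs) (germ' Ht) = germ' Hst.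
Proof.
have Rg := grep_rel (mkGP Hs); have Rh := grep_rel (mkGP Ht).
rewrite /Gmul /germ'.
move: Rg Rh; rewrite /germ' /=.
case: (grep (germ (mkGP Hs))) => [[s0 phi0] H0].
case: (grep (germ (mkGP Ht))) => [[t0 psi0] H0'] Rg Rh.
have Rw := germ_act_wd Rh.
case: Rg => /= E1 [e [He1 Hm1]]; case: Rh => /= E2 [e' [He2 Hm2]].
subst psi0 phi0 => /=.
case: pselect => /= [H|N].
  apply: germ_eq; split => //.
  exists (mulI (conjE t e) e'); split.
    by rewrite char_mulI He2 andbT.
  by apply: gmul_alg; [exact: (proj2_sig e)|exact: (proj2_sig e')| |].
exfalso; apply: N.
have -> : char_at psi (ssE (m s0 t0)) = char_at (germ_act H0') (ssE s0).
  by apply: char_val => /=; rewrite ss_mul.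
have E : germ_act H0' = germ_act Ht by exact: Rw.
by rewrite E.
Qed.

Lemma germ_act_inj (s : S) (phi phi' : Ehat S) (H : char_at phi (ssE s))
  (H' : char_at phi' (ssE s)) : germ_act H = germ_act H' -> phi = phi'.
Proof.
have K : forall psi (Hp : char_at psi (ssE s)) e,
    char_at psi e = char_at (germ_act Hp) (conjE (st s) e).
  move=> psi Hp e; rewrite /=.
  rewrite -[char_at psi e]andbT -Hp -char_mulI; apply: char_val => /=.
  by rewrite isg_starK conj_inv_alg //; exact: (proj2_sig e).
by move=> E; apply: Ehat_eq => e; rewrite (K _ H) (K _ H') E.
Qed.

Lemma char_conj_le (t : S) (psi : Ehat S) (e : Idem S) :
  char_at psi (conjE t e) -> char_at psi (ssE t).
Proof.
move=> H; have : char_at psi (mulI (conjE t e) (ssE t)).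
  have -> : char_at psi (mulI (conjE t e) (ssE t)) = char_at psi (conjE t e).
    by apply: char_val => /=; rewrite conj_le_alg //; exact: (proj2_sig e).
  exact: H.
by rewrite char_mulI => /andP [].
Qed.

End GermTh.

Lemma char_ss_mul (S : invSG) (psi : Ehat S) (s t : S) :
  char_at psi (ssE (isg_mul s t)) = char_at psi (conjE t (ssE s)).
Proof. by apply: char_val => /=; rewrite ss_mul. Qed.

Lemma char_ss_star (S : invSG) (psi : Ehat S) (s : S) :
  char_at psi (ssE (isg_mul (isg_star s) s)) = char_at psi (ssE s).
Proof. by apply: char_val => /=; rewrite isg_idem_star ?isg_ss_idem // isg_ss_idem. Qed.


Set Implicit Arguments.
Unset Strict Implicit.
Unset Printing Implicit Defensive.
Local Open Scope classical_set_scope.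

Section Top.
Variable S : invSG.
Local Notation m := (@isg_mul S).
Local Notation st := (@isg_star S).

Lemma open_Uset (e : Idem S) : open (Uset e).
Proof. by move=> O _ _ _ OB; apply: OB; exists e. Qed.

Lemma cont_to_Ehat (X : topologicalType) (f : X -> Ehat S) :
  (forall e, open (f @^-1` Uset e)) -> continuous f.
Proof.
move=> H; apply/continuousP => A Ao.
apply: (Ao (fun V => open (f @^-1` V))).
- by rewrite preimage_setT; apply: openT.
- by move=> U V HU HV; rewrite preimage_setI; apply: openI.
- move=> I F HF; rewrite preimage_bigcup; apply: bigcup_open => i _; exact: HF.
- by move=> _ [e ->]; apply: H.
Qed.

Definition basicW (s : S) (U : set (Ehat S)) : set (GArr S) :=
  [set g | exists phi (H : char_at phi (ssE s)), U phi /\ g = germ' H].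

Lemma open_basicW (s : S) (U : set (Ehat S)) : open U -> U `<=` Uset (ssE s) ->
  open (basicW s U).
Proof.
move=> Uo sU; change (gen_open (@GArr_basic S) (basicW s U)).
by move=> O _ _ _ OB; apply: OB; exists s, U; split.
Qed.

Lemma germ_nbhs (A : set (GArr S)) : open A ->
  forall (s : S) (phi0 : Ehat S) (H0 : char_at phi0 (ssE s)), A (germ' H0) ->
  exists U : set (Ehat S), [/\ open U, U phi0 &
    forall phi (H : char_at phi (ssE s)), U phi -> A (germ' H)].
Proof.
move=> Ao; apply: (Ao (fun A => forall (s : S) (phi0 : Ehat S) (H0 : char_at phi0 (ssE s)), A (germ' H0) ->
  exists U : set (Ehat S), [/\ open U, U phi0 &
    forall phi (H : char_at phi (ssE s)), U phi -> A (germ' H)])).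
- by move=> s phi0 H0 _; exists setT; split => //; apply: openT.
- move=> V W HV HW s phi0 H0 [/HV [U1 [U1o U1p H1]] /HW [U2 [U2o U2p H2]]].
  exists (U1 `&` U2); split => //; first exact: openI.
  by move=> phi H [/H1 ? /H2 ?].
- move=> I F HF s phi0 H0 [i _ /HF [U [Uo Up HU]]].
  by exists U; split => // phi H /HU ?; exists i.
- move=> _ [t [U' [U'o sU' ->]]] s phi0 H0 [psi [Ht [U'psi E]]].
  have [/= E1 [e [He Hm]]] := germ_eqE E; subst psi.
  exists (U' `&` Uset e); split => //; first by apply: openI => //; apply: open_Uset.
  move=> phi H [U'phi Phie]; exists phi, (sU' _ U'phi); split => //.
  exact: germ'_eqI Phie Hm.
Qed.

End Top.


Set Implicit Arguments.
Unset Strict Implicit.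
Unset Printing Implicit Defensive.
Local Open Scope classical_set_scope.

Section Act.
Variable S : invSG.
Variable G : gpd.
Hypothesis HG : is_top_groupoid G.
Variable a : alg_morph (germ_gpd S) G.
Local Notation m := (@isg_mul S).
Local Notation st := (@isg_star S).
Local Notation src := (@gsrc G).
Local Notation rng := (@grng G).
Local Notation u := (@gunit G).
Local Notation mul := (@gmul G).
Local Notation inv := (@ginv G).
Local Notation rho := (am_rho a).

Definition A2 (k : GArr S) (g : gArr G) : gArr G :=
  match pselect ((k, g) \in act_dom rho) with
  | left H => am_act (a:=a) (exist _ (k, g) H)
  | right _ => g end.

Lemma A2E k g H : A2 k g = am_act (a:=a) (exist _ (k, g) H).
Proof. rewrite /A2; case: pselect => [H'|//]; by rewrite (Prop_irrelevance H H'). Qed.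

Lemma indom (k : GArr S) g : Gsrc k = rho g -> (k, g) \in act_dom rho.
Proof. by move=> E; rewrite in_setE. Qed.

Lemma A_rho k g : Gsrc k = rho g -> rho (A2 k g) = Grng k.
Proof. by move=> /indom H; rewrite (A2E H); apply: (am_rho_act (a:=a)). Qed.

Lemma A_assoc k k' x : Gsrc k' = rho x -> Gsrc k = rho (A2 k' x) ->
  Gsrc (Gmul k k') = rho x -> A2 k (A2 k' x) = A2 (Gmul k k') x.
Proof.
move=> /indom H1; rewrite (A2E H1) => /indom H2 /indom H3.
by rewrite (A2E H2) (A2E H3); apply: (am_assoc (a := a)).
Qed.

Lemma A_unit x : A2 (Gunit (rho x)) x = x.
Proof.
have H : (Gunit (rho x) : gArr (germ_gpd S), x) \in act_dom rho.
  by apply: indom; rewrite /Gunit Gsrc_germ'.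
by rewrite (A2E H); apply: (am_unit (a := a)).
Qed.

Lemma rho_mul h h' : src h = rng h' -> rho (mul h h') = rho h.
Proof. exact: am_rho_mul. Qed.

Lemma A_mul k h h' : Gsrc k = rho h -> src h = rng h' ->
  src (A2 k h) = rng h' /\ A2 k (mul h h') = mul (A2 k h) h'.
Proof.
move=> E Hc; have H1 := indom E.
have H2 : (k, mul h h') \in act_dom rho by apply: indom; rewrite rho_mul.
by rewrite (A2E H1) (A2E H2); apply: (am_act_mul (a := a)).
Qed.

Lemma rho_u g : rho g = rho (u (rng g)).
Proof. by rewrite -{1}(g_mul1g HG g) rho_mul // (g_src_u HG). Qed.

Lemma rho_uE g x : rng g = x -> rho (u x) = rho g.
Proof. by move=> <-; rewrite -rho_u. Qed.

Lemma src_A k x : Gsrc k = rho (u x) -> src (A2 k (u x)) = x.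
Proof.
move=> E; have Hc : src (u x) = rng (u x) by rewrite (g_src_u HG) (g_rng_u HG).
by have [-> _] := A_mul E Hc; rewrite (g_rng_u HG).
Qed.

Definition fA (s : S) x (Hx : char_at (rho (u x)) (ssE s)) : gArr G := A2 (germ' Hx) (u x).

Definition thetaA (s : S) : set (gArr G) := fun g =>
  exists (x : gObj G) (Hx : char_at (am_rho a (gunit x)) (ssE s))
           (Hd : (germ' Hx : gArr (germ_gpd S), gunit x) \in act_dom (am_rho a)),
      g = am_act (exist _ (germ' Hx : gArr (germ_gpd S), gunit x) Hd).

Lemma thetaAP s g : thetaA s g <-> exists x Hx, g = @fA s x Hx.
Proof.
split => [[x [Hx [Hd ->]]]|[x [Hx ->]]]; exists x, Hx; first by rewrite /fA (A2E Hd).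
have Hd : (germ' Hx : gArr (germ_gpd S), gunit x) \in act_dom (am_rho a).
  by apply: indom; rewrite Gsrc_germ'.
by exists Hd; rewrite /fA (A2E Hd).
Qed.

Lemma fA_src s x Hx : src (@fA s x Hx) = x.
Proof. by apply: src_A; rewrite Gsrc_germ'. Qed.

Lemma fA_rho s x Hx : rho (@fA s x Hx) = germ_act Hx.
Proof. by rewrite /fA A_rho ?Grng_germ' // Gsrc_germ'. Qed.

Lemma fA_ext s x Hx Hx' : @fA s x Hx = @fA s x Hx'.
Proof. by rewrite (Prop_irrelevance Hx Hx'). Qed.

Lemma core (s t : S) x (Hx : char_at (rho (u x)) (ssE t))
  (Hs : char_at (germ_act Hx) (ssE s)) (Hst : char_at (rho (u x)) (ssE (m s t)))
  y (Hy : char_at (rho (u y)) (ssE s)) : y = rng (fA Hx) ->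
  mul (fA Hy) (fA Hx) = fA Hst.
Proof.
move=> Ey.
have ry : rho (u y) = germ_act Hx by rewrite (rho_uE (esym Ey)) fA_rho.
have E1 : Gsrc (germ' Hy) = rho (u y) by rewrite Gsrc_germ'.
have E2 : src (u y) = rng (fA Hx) by rewrite (g_src_u HG).
have [_ E] := A_mul E1 E2.
have E3 : mul (u y) (fA Hx) = fA Hx by rewrite Ey (g_mul1g HG).
rewrite /fA -E E3 (germ'_ext Hy Hs ry) /fA A_assoc.
- by rewrite Gmul_germ'.
- by rewrite Gsrc_germ'.
- by rewrite Gsrc_germ' -/(fA Hx) fA_rho.
- by rewrite Gmul_germ' Gsrc_germ'.
Qed.

Lemma theta_mul (s t : S) : thetaA (m s t) = bis_mul (thetaA s) (thetaA t).
Proof.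
apply: funext => g; apply: propext; split.
  move/thetaAP => [x [Hx ->]].
  have Ht : char_at (rho (u x)) (ssE t).
    by apply: (@char_conj_le _ _ _ (ssE s)); rewrite -char_ss_mul.
  have Hs : char_at (germ_act Ht) (ssE s) by rewrite -germ_comp.
  have Hy : char_at (rho (u (rng (fA Ht)))) (ssE s) by rewrite (rho_uE erefl) fA_rho.
  exists (fA Hy), (fA Ht); split.
  - by apply/thetaAP; exists (rng (fA Ht)), Hy.
  - by apply/thetaAP; exists x, Ht.
  - by rewrite fA_src.
  - by rewrite (core Hs Hx Hy).
move=> [g1 [g2 [/thetaAP [y [Hy ->]] /thetaAP [x [Hx ->]] Hc ->]]].
have Ey : y = rng (fA Hx) by rewrite -Hc fA_src.
have ry : rho (u y) = germ_act Hx by rewrite (rho_uE (esym Ey)) fA_rho.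
have Hs : char_at (germ_act Hx) (ssE s) by rewrite -ry.
have Hst : char_at (rho (u x)) (ssE (m s t)) by rewrite germ_comp.
by apply/thetaAP; exists x, Hst; rewrite (core Hs Hst Hy).
Qed.

Lemma theta_zero : thetaA (isg_zero S) = set0.
Proof.
apply: funext => g; apply: propext; split => // /thetaAP [x [Hx _]].
by move: Hx; rewrite char_zero //= isg_muls0.
Qed.

Lemma theta_one : thetaA (isg_one S) = @bis_unit G.
Proof.
apply: funext => g; apply: propext; split.
  move=> /thetaAP [x [Hx ->]]; exists x => //.
  by rewrite /fA (Prop_irrelevance Hx (unit_ok _)) -/(Gunit _) A_unit.
move=> [x _ <-]; apply/thetaAP; exists x, (unit_ok _).
by rewrite /fA -/(Gunit _) A_unit.
Qed.

Lemma theta_src_inj s g h : thetaA s g -> thetaA s h -> src g = src h -> g = h.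
Proof.
move=> /thetaAP [x [Hx ->]] /thetaAP [y [Hy ->]]; rewrite !fA_src => E; subst y.
exact: fA_ext.
Qed.

Lemma Hi_ok (s : S) x (Hx : char_at (rho (u x)) (ssE s)) :
  char_at (germ_act Hx) (ssE (st s)).
Proof. by rewrite -germ_comp char_ss_star. Qed.

Lemma back (s : S) x (Hx : char_at (rho (u x)) (ssE s)) :
  A2 (germ' (Hi_ok Hx)) (fA Hx) = u x.
Proof.
have Hst : char_at (rho (u x)) (ssE (m (st s) s)) by rewrite char_ss_star.
rewrite /fA A_assoc.
- rewrite (Gmul_germ' (Hi_ok Hx) Hst).
  have H' : char_at (rho (u x)) (ssE (sval (ssE s))) := Hst.
  rewrite (Prop_irrelevance Hst H') (germ'_idem H') //; exact: A_unit.
- by rewrite Gsrc_germ'.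
- by rewrite Gsrc_germ' -/(fA Hx) fA_rho.
- by rewrite (Gmul_germ' (Hi_ok Hx) Hst) Gsrc_germ'.
Qed.

Lemma theta_rng_inj s g h : thetaA s g -> thetaA s h -> rng g = rng h -> g = h.
Proof.
move=> /thetaAP [x [Hx ->]] /thetaAP [y [Hy ->]] E.
have Ea : germ_act Hx = germ_act Hy.
  by rewrite -!fA_rho (rho_u (fA Hx)) (rho_u (fA Hy)) E.
have Eb : germ' (Hi_ok Hx) = germ' (Hi_ok Hy) by apply: germ'_ext.
set fx := fA Hx; set fy := fA Hy.
set c := mul (inv fx) fy.
have Ec : fy = mul fx c.
  rewrite /c -(g_mulA HG) ?(g_src_inv HG) ?(g_rng_inv HG) //.
  by rewrite (g_mulgV HG) E (g_mul1g HG).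
have Sk : Gsrc (germ' (Hi_ok Hx)) = rho fx by rewrite Gsrc_germ' fA_rho.
have Sc : src fx = rng c by rewrite /c (g_rng_mul HG) ?(g_rng_inv HG) // (g_src_inv HG) E.
have [_ K] := A_mul Sk Sc.
have : u y = c.
  rewrite -(back Hy) -/fy -Eb Ec K (back Hx).
  by rewrite -{2}(g_mul1g HG c) -Sc fA_src.
move=> Ey.
have xy : y = x.
  by rewrite -(g_rng_u HG y) Ey /c (g_rng_mul HG) ?(g_rng_inv HG) ?fA_src // (g_src_inv HG) E.
subst y; exact: fA_ext.
Qed.

Hypothesis HE : etale G.

Lemma theta_open s : open (thetaA s).
Proof.
apply: open_local => g /thetaAP [x0 [H0 ->]].
have [V [[Vo Vsrc _ _ _] Vg]] := HE (fA H0).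
have Hd : (germ' H0 : gArr (germ_gpd S), u x0) \in act_dom rho.
  by apply: indom; rewrite Gsrc_germ'.
have Vp : V (am_act (a:=a) (exist _ (germ' H0 : gArr (germ_gpd S), u x0) Hd)) by rewrite -A2E.
have [A [B [Ao Bo Ak Bu HAB]]] := cont_extract (am_act_cont (a:=a)) Vo Vp.
have [U [Uo Ux HU]] := germ_nbhs Ao Ak.
set W := [set x | (U `&` Uset (ssE s)) (rho (u x)) /\ B (u x)].
have Wo : open W.
  apply: openI.
    have := (continuousP _).1 (g_cont_u HG) _ ((continuousP _).1 (am_rho_cont (a:=a)) _ (openI Uo (open_Uset (ssE s)))).
    by [].
  exact: ((continuousP _).1 (g_cont_u HG) _ Bo).
exists (V `&` src @^-1` W); split.
- apply: openI => //; exact: ((continuousP _).1 (g_cont_src HG) _ Wo).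
- by split => //; rewrite /= fA_src; split => //; split.
move=> h [Vh [[Uh Sh] Bh]].
apply/thetaAP; exists (src h), Sh.
have Hd' : (germ' Sh : gArr (germ_gpd S), u (src h)) \in act_dom rho.
  by apply: indom; rewrite Gsrc_germ'.
apply: Vsrc => //; last by rewrite fA_src.
rewrite /fA (A2E Hd'); apply: HAB => /=; [exact: HU | exact: Bh].
Qed.

Lemma thetaA_hom : is_bis_hom thetaA.
Proof.
split.
- move=> s; apply: (bisectionP HE); [exact: theta_open | exact: theta_src_inj | exact: theta_rng_inj].
- exact: theta_mul.
- exact: theta_zero.
- exact: theta_one.
Qed.

End Act.


Set Implicit Arguments.
Unset Strict Implicit.
Unset Printing Implicit Defensive.
Local Open Scope classical_set_scope.

Section Hom.
Variable S : invSG.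
Variable G : gpd.
Hypothesis HG : is_top_groupoid G.
Hypothesis HE : etale G.
Variable theta : S -> set (gArr G).
Hypothesis Hth : is_bis_hom theta.
Local Notation m := (@isg_mul S).
Local Notation st := (@isg_star S).
Local Notation mA := (@isg_mulA S).
Local Notation src := (@gsrc G).
Local Notation rng := (@grng G).
Local Notation u := (@gunit G).
Local Notation mul := (@gmul G).
Local Notation inv := (@ginv G).

Lemma th_bis s : bisection (theta s). Proof. by case: Hth. Qed.
Lemma th_src_inj s g h : theta s g -> theta s h -> src g = src h -> g = h.
Proof. by case: (th_bis s) => _ H _ _ _; apply: H. Qed.
Lemma th_rng_inj s g h : theta s g -> theta s h -> rng g = rng h -> g = h.
Proof. by case: (th_bis s) => _ _ H _ _; apply: H. Qed.
Lemma th_mul s t : theta (m s t) = bis_mul (theta s) (theta t).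
Proof. by case: Hth. Qed.
Lemma th_zero : theta (isg_zero S) = set0. Proof. by case: Hth. Qed.
Lemma th_one : theta (isg_one S) = @bis_unit G. Proof. by case: Hth. Qed.

Lemma mulin s t g h : theta s g -> theta t h -> src g = rng h -> theta (m s t) (mul g h).
Proof. by move=> Tg Th E; rewrite th_mul; exists g, h. Qed.

Lemma idem_unit (e : S) k : m e e = e -> theta e k -> k = u (rng k).
Proof.
move=> He Tk.
have : theta (m e e) k by rewrite He.
rewrite th_mul => -[a [b [Ta Tb Hc Ek]]].
have bk : b = k by apply: (th_src_inj Tb Tk); rewrite Ek (g_src_mul HG).
subst b.
have : a = u (rng k) by apply: (g_left_unit HG).
move=> Ea; subst a.
by symmetry; apply: (th_rng_inj Ta Tk); rewrite (g_rng_u HG).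
Qed.

Lemma idem_unit_src (e : S) k : m e e = e -> theta e k -> rng k = src k.
Proof. by move=> He /(idem_unit He) E; rewrite E (g_src_u HG) (g_rng_u HG). Qed.

Lemma restrict (s e : S) h : m e e = e -> theta (m s e) h -> theta s h.
Proof.
move=> He; rewrite th_mul => -[a [b [Ta Tb Hc ->]]].
rewrite (idem_unit He Tb) -Hc (g_mulg1 HG) //.
Qed.

Lemma inv_in s g : theta s g -> theta (st s) (inv g).
Proof.
move=> Tg; have : theta (m (m s (st s)) s) g by rewrite isg_inv1.
rewrite th_mul => -[ab [c [Tab Tc Hc Eg]]].
move: Tab; rewrite th_mul => -[a' [b [Ta Tb Hab Eab]]].
have cg : c = g by apply: (th_src_inj Tc Tg); rewrite Eg (g_src_mul HG).
subst c.
have ag : a' = g.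
  apply: (th_rng_inj Ta Tg); rewrite Eg (g_rng_mul HG) // Eab (g_rng_mul HG) //.
subst a' ab.
by rewrite -(g_inv_uniq HG Hab Hc).
Qed.

Lemma src_in s h : theta s h -> theta (m (st s) s) (u (src h)).
Proof.
move=> Th; rewrite -(g_mulVg HG); apply: mulin => //; first exact: inv_in.
by rewrite (g_src_inv HG).
Qed.

Lemma ex_in s x : theta (m (st s) s) (u x) -> exists h, theta s h /\ src h = x.
Proof.
rewrite th_mul => -[a' [b [Ta Tb Hc E]]]; exists b; split => //.
by rewrite -(g_src_u HG x) E (g_src_mul HG).
Qed.

Definition chr (x : gObj G) : Idem S -> bool := fun e => `[< theta (sval e) (u x) >].

Lemma chr_char x : is_char (chr x).
Proof.
split.
- by move=> z Hz; rewrite /chr Hz th_zero; apply/negbTE/asboolPn.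
- by move=> z Hz; rewrite /chr Hz th_one; apply/asboolP; exists x.
- move=> e f g Hg; rewrite /chr Hg; apply/asboolP/andP.
  + rewrite th_mul => -[a' [b [Ta Tb Hc E]]].
    have Ea := idem_unit (proj2_sig e) Ta; have Eb := idem_unit (proj2_sig f) Tb.
    have ra : rng a' = rng b by rewrite -Hc Ea (g_src_u HG) (g_rng_u HG).
    have xr : x = rng a'.
      by apply: (g_src_rng_u HG); rewrite E Eb -ra -Ea Ea (g_mulu HG) -Ea.
    by split; apply/asboolP; [rewrite xr -Ea | rewrite xr ra -Eb].
  + move=> [/asboolP Te /asboolP Tf]; rewrite -(g_mulu HG); apply: mulin => //.
    by rewrite (g_src_u HG) (g_rng_u HG).
Qed.

Definition chi (x : gObj G) : Ehat S := exist _ (chr x) (chr_char x).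

Lemma chiE x (e : Idem S) : char_at (chi x) e <-> theta (sval e) (u x).
Proof. by rewrite /char_at /= /chr; split => /asboolP. Qed.

Definition rho2 (g : gArr G) : Ehat S := chi (rng g).

Lemma chi_cont : continuous chi.
Proof.
apply: cont_to_Ehat => e.
have -> : chi @^-1` Uset e = u @^-1` theta (sval e).
  by apply: funext => x; apply: propext; exact: chiE.
apply: ((continuousP _).1 (g_cont_u HG)); by case: (th_bis (sval e)).
Qed.

Lemma rho2_cont : continuous rho2.
Proof.
apply/continuousP => A Ao.
exact: ((continuousP _).1 (g_cont_rng HG) _ ((continuousP _).1 chi_cont _ Ao)).
Qed.

Lemma rho2_mul h h' : src h = rng h' -> rho2 (mul h h') = rho2 h.
Proof. by move=> E; rewrite /rho2 (g_rng_mul HG). Qed.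

Definition hsel (s : S) (x : gObj G) : gArr G :=
  match pselect (exists h, theta s h /\ src h = x) with
  | left H => sval (cid H)
  | right _ => u x end.

Lemma hselP s x h : theta s h -> src h = x -> hsel s x = h.
Proof.
move=> Th Eh; rewrite /hsel; case: pselect => [H|N]; last by exfalso; apply: N; exists h.
case: cid => h' [Th' Eh'] /=; apply: (th_src_inj Th' Th); by rewrite Eh Eh'.
Qed.

Lemma germ_eta (p : GP S) : germ p = germ' (proj2_sig p).
Proof. by case: p => [[s phi] H]. Qed.

Lemma grep_eta (k : GArr S) : k = germ' (proj2_sig (grep k)).
Proof. by rewrite -germ_eta grep_spec. Qed.

Lemma HS (k : GArr S) g : Gsrc k = rho2 g ->
  theta (sval (grep k)).1 (hsel (sval (grep k)).1 (rng g)) /\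
  src (hsel (sval (grep k)).1 (rng g)) = rng g.
Proof.
rewrite /Gsrc => E; have H := proj2_sig (grep k); move: H; rewrite E.
move=> /chiE /ex_in [h [Th Eh]]; by rewrite (hselP Th Eh).
Qed.

Lemma KL (k : GArr S) (s : S) phi (Hs : char_at phi (ssE s)) g h :
  k = germ' Hs -> Gsrc k = rho2 g -> theta s h -> src h = rng g ->
  hsel (sval (grep k)).1 (rng g) = h.
Proof.
move=> Ek Es Th Eh; apply: hselP => //.
have := grep_rel (mkGP Hs); rewrite -/(germ' Hs) -Ek.
case: (grep k) => [[s0 phi0] H0] [/= E0 [e [He Hm]]].
subst phi0.
have Hp : phi = rho2 g by rewrite -Es Ek Gsrc_germ'.
have Tu : theta (sval e) (u (rng g)) by apply/chiE; rewrite -/(rho2 g) -Hp.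
have Te : theta (m s (sval e)) h.
  rewrite -(g_mulg1 HG h) Eh; apply: mulin => //; by rewrite (g_rng_u HG).
rewrite -Hm in Te; exact: restrict (proj2_sig e) Te.
Qed.

Definition actfun (p : set_type (act_dom (K := germ_gpd S) rho2)) : gArr G :=
  mul (hsel (sval (grep (sval p).1)).1 (rng (sval p).2)) (sval p).2.

Lemma dom_src (p : set_type (act_dom (K := germ_gpd S) rho2)) : Gsrc (sval p).1 = rho2 (sval p).2.
Proof. by case: p => [[k g] /= H]; move: H; rewrite in_setE. Qed.

Lemma rho_act_gen (k : GArr S) g : Gsrc k = rho2 g ->
  rho2 (mul (hsel (sval (grep k)).1 (rng g)) g) = Grng k.
Proof.
move=> E; have [Th Eh] := HS E.
move: Th Eh; set s := (sval (grep k)).1; set h := hsel s (rng g) => Th Eh.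
rewrite rho2_mul // /rho2 /Grng.
have E' : (sval (grep k)).2 = chi (src h) by rewrite Eh; exact: E.
apply: Ehat_eq => e /=; rewrite E' -/s.
apply/idP/idP => /chiE T; apply/chiE.
  have T1 : theta (m (st s) (sval e)) (mul (inv h) (u (rng h))).
    apply: mulin => //; first exact: inv_in.
    by rewrite (g_src_inv HG) (g_rng_u HG).
  have T2 : theta (m (m (st s) (sval e)) s) (mul (mul (inv h) (u (rng h))) h).
    apply: mulin => //.
    by rewrite (g_src_mul HG) ?(g_src_u HG) // (g_src_inv HG) (g_rng_u HG).
  move: T2; rewrite -(g_src_inv HG) (g_mulg1 HG) (g_mulVg HG) -mA //.
have T1 : theta (m s (m (st s) (m (sval e) s))) (mul h (u (src h))).
  by apply: mulin => //; rewrite (g_rng_u HG).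
have T2 : theta (m (m s (m (st s) (m (sval e) s))) (st s)) (mul (mul h (u (src h))) (inv h)).
  apply: mulin => //; first exact: inv_in.
  by rewrite (g_src_mul HG) ?(g_rng_u HG) // (g_src_u HG) (g_rng_inv HG).
move: T2; rewrite (g_mulg1 HG) (g_mulgV HG) -mA.
have -> : m s (m (m (st s) (m (sval e) s)) (st s)) = m (sval e) (m s (st s)).
  by apply: conj2_alg; exact: (proj2_sig e).
by apply: restrict; exact: isg_sst_idem.
Qed.

Lemma act_rho (p : set_type (act_dom (K := germ_gpd S) rho2)) :
  rho2 (actfun p) = Grng (sval p).1.
Proof. exact: rho_act_gen (dom_src p). Qed.

Lemma Gmul_eq (k k' : GArr S)
  (Hc : char_at (sval (grep k')).2 (ssE (m (sval (grep k)).1 (sval (grep k')).1))) :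
  Gmul k k' = germ' Hc.
Proof.
rewrite /Gmul; case: pselect => [H|N]; first by rewrite (Prop_irrelevance H Hc).
by exfalso; apply: N.
Qed.

Lemma act_assoc (k k' : gArr (germ_gpd S)) (x : gArr G)
  (H1 : (k', x) \in act_dom (K := germ_gpd S) rho2)
  (H2 : (k, actfun (exist _ (k', x) H1)) \in act_dom (K := germ_gpd S) rho2)
  (H3 : (gmul k k', x) \in act_dom (K := germ_gpd S) rho2) :
  actfun (exist _ (k, actfun (exist _ (k', x) H1)) H2) = actfun (exist _ (gmul k k', x) H3).
Proof.
have E1 := dom_src (exist _ (k', x) H1).
have E2 := dom_src (exist _ (k, actfun (exist _ (k', x) H1)) H2).
have E3 := dom_src (exist _ (gmul k k', x) H3).
move: E1 E2 E3; rewrite /actfun /= => E1 E2 E3.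
have [Th' Eh'] := HS E1.
move: Th' Eh' E2 E3; set s' := (sval (grep k')).1; set h' := hsel s' (rng x) => Th' Eh' E2 E3.
have [Th Eh] := HS E2.
move: Th Eh; set s := (sval (grep k)).1; rewrite (g_rng_mul HG) //.
set h := hsel s (rng h') => Th Eh.
have Hc : char_at (sval (grep k')).2 (ssE (m s s')).
  rewrite (germ_comp _ (proj2_sig (grep k'))).
  have -> : germ_act (proj2_sig (grep k')) = Gsrc k.
    by rewrite E2 (rho_act_gen E1).
  exact: (proj2_sig (grep k)).
have EG : gmul k k' = germ' Hc by exact: Gmul_eq.
rewrite (KL EG E3 (h := mul h h')).
- by rewrite (g_mulA HG) // (g_rng_mul HG).
- exact: mulin.
- by rewrite (g_src_mul HG).
Qed.

Lemma act_unit (x : gArr G)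
  (H1 : (gunit (g:=germ_gpd S) (rho2 x), x) \in act_dom (K := germ_gpd S) rho2) :
  actfun (exist _ (gunit (g:=germ_gpd S) (rho2 x), x) H1) = x.
Proof.
have E1 := dom_src (exist _ (gunit (g:=germ_gpd S) (rho2 x), x) H1).
rewrite /actfun /=; move: E1 => /= E1.
rewrite (KL (erefl : Gunit (rho2 x) = germ' (unit_ok (rho2 x))) E1 (h := u (rng x))).
- exact: (g_mul1g HG).
- by rewrite th_one; exists (rng x).
- exact: (g_src_u HG).
Qed.

Lemma act_mul (k : gArr (germ_gpd S)) (h h' : gArr G) (Hc : src h = rng h')
  (H1 : (k, h) \in act_dom (K := germ_gpd S) rho2)
  (H2 : (k, mul h h') \in act_dom (K := germ_gpd S) rho2) :
  src (actfun (exist _ (k, h) H1)) = rng h' /\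
  actfun (exist _ (k, mul h h') H2) = mul (actfun (exist _ (k, h) H1)) h'.
Proof.
have E1 := dom_src (exist _ (k, h) H1).
rewrite /actfun /=; move: E1 => /= E1.
have [Th Eh] := HS E1.
rewrite (g_rng_mul HG) //; split; first by rewrite (g_src_mul HG).
by rewrite (g_mulA HG).
Qed.

Lemma act_cont : continuous actfun.
Proof.
apply/continuousP => O Oo.
set Z : set (GArr S * gArr G) := fun p => exists N : set (GArr S * gArr G),
  [/\ open N, N p & forall q : set_type (act_dom (K := germ_gpd S) rho2), N (sval q) -> O (actfun q)].
have Zo : open Z.
  by apply: open_local => p [N [No Np HN]]; exists N; split => // p' Np'; exists N; split.
have -> : actfun @^-1` O = set_val @^-1` Z; last exact: open_sub_preimage Zo.
apply: funext => q; apply: propext; split; last by move=> [N [_ Nq HN]]; exact: HN.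
move=> Oq.
have E0 := dom_src q.
have [Th0 Eh0] := HS E0.
move: Th0 Eh0 Oq; rewrite /actfun.
set s := (sval (grep (sval q).1)).1; set h0 := hsel s (rng (sval q).2) => Th0 Eh0 Oq.
have Hcp : (h0, (sval q).2) \in @composable G by rewrite in_setE.
have Op : O ((fun p : set_type (@composable G) => mul (sval p).1 (sval p).2)
   (exist _ (h0, (sval q).2) Hcp)) by [].
have [A [B [Ao Bo Ah Bg HAB]]] := cont_extract (g_cont_mul HG) Oo Op.
have A'o : open (A `&` theta s) by apply: openI => //; case: (th_bis s).
have SAo : open (src @` (A `&` theta s)).
  by case: (th_bis s) => _ _ _ Hs _; apply: Hs => // ? [].
exists (basicW s (Uset (ssE s)) `*` (B `&` rng @^-1` (src @` (A `&` theta s)))); split.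
- apply: open_setX; first by apply: open_basicW => //; exact: open_Uset.
  apply: openI => //; exact: ((continuousP _).1 (g_cont_rng HG) _ SAo).
- split.
    exists (sval (grep (sval q).1)).2, (proj2_sig (grep (sval q).1)); split.
      exact: (proj2_sig (grep (sval q).1)).
    exact: grep_eta.
  by split => //=; exists h0.
move=> q' [[phi [Hphi [_ Ek]]] [Bq' [a' [Aa Ta] Ea]]].
rewrite /actfun (KL Ek (dom_src q') Ta Ea).
have Hc' : (a', (sval q').2) \in @composable G by rewrite in_setE.
exact: (HAB (exist (fun x => x \in composable (G:=G)) (a', (sval q').2) Hc') Aa Bq').
Qed.

Definition amB : alg_morph (germ_gpd S) G :=
  @AlgMorph (germ_gpd S) G rho2 actfun rho2_cont act_cont act_rho act_assoc act_unit
    rho2_mul act_mul.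

Lemma amB_corr : corresponds amB theta.
Proof.
move=> s g; split.
  move=> Tg.
  have Hx : char_at (rho2 (u (src g))) (ssE s).
    by rewrite /rho2 (g_rng_u HG); apply/chiE; exact: src_in.
  have Hd : (germ' Hx : gArr (germ_gpd S), u (src g)) \in act_dom (K := germ_gpd S) rho2.
    by rewrite in_setE /act_dom /= Gsrc_germ'.
  exists (src g), Hx, Hd => /=.
  rewrite /actfun /= (KL (erefl (germ' Hx)) _ Tg).
  - by rewrite (g_mulg1 HG).
  - by rewrite Gsrc_germ'.
  - by rewrite (g_rng_u HG).
move=> [x [Hx [Hd ->]]] /=.
have : theta (m (st s) s) (u x).
  by have Hx' := Hx; move: Hx'; rewrite /= /rho2 (g_rng_u HG) => /chiE.
move=> /ex_in [h [Th Eh]].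
rewrite /actfun /= (KL (erefl (germ' Hx)) _ Th).
- by rewrite -Eh (g_mulg1 HG).
- by rewrite Gsrc_germ'.
- by rewrite (g_rng_u HG).
Qed.

Lemma corr_rho (a' : alg_morph (germ_gpd S) G) : corresponds a' theta ->
  forall g, am_rho a' g = rho2 g.
Proof.
move=> Hc.
have K : forall x, am_rho a' (u x) = chi x.
  move=> x; apply: Ehat_eq => e; apply/idP/idP => He.
    have Hx : char_at (am_rho a' (u x)) (ssE (sval e)).
      rewrite (char_val _ (b := e)) //= isg_idem_star; exact: (proj2_sig e).
    apply/chiE; apply: (Hc _ _).2; apply/thetaAP; exists x, Hx.
    by rewrite /fA (germ'_idem Hx He) A_unit.
  move: He => /chiE /(Hc _ _).1 /thetaAP [y [Hy Ey]].
  have xy : x = y by rewrite -(g_src_u HG x) Ey (fA_src HG).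
  subst y; rewrite (char_val _ (b := ssE (sval e))) //= isg_idem_star; last exact: (proj2_sig e).
  by rewrite (proj2_sig e).
by move=> g; rewrite (rho_u HG) K.
Qed.

Lemma corr_act (a' : alg_morph (germ_gpd S) G) : corresponds a' theta ->
  forall k g (H : (k, g) \in act_dom (am_rho a')),
  am_act (exist _ (k, g) H) = mul (hsel (sval (grep k)).1 (rng g)) g.
Proof.
move=> Hc k g H; rewrite -A2E.
have E : Gsrc k = am_rho a' (u (rng g)) by move: H; rewrite in_setE /act_dom /= => ->; exact: (rho_u HG).
have Hs' : char_at (am_rho a' (u (rng g))) (ssE (sval (grep k)).1).
  rewrite -E; exact: (proj2_sig (grep k)).
have Ek : k = germ' Hs' by rewrite {1}(grep_eta k); apply: germ'_ext; exact: E.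
have T : theta (sval (grep k)).1 (fA Hs').
  by apply: (Hc _ _).2; apply/thetaAP; exists (rng g), Hs'.
rewrite (hselP T (fA_src HG Hs')).
have E2 : src (u (rng g)) = rng g by rewrite (g_src_u HG).
have [_ K] := A_mul E E2.
by rewrite -{1}(g_mul1g HG g) K /fA -Ek.
Qed.

End Hom.

Lemma alg_morph_ext (K H : gpd) (a1 a2 : alg_morph K H) (E : am_rho a1 = am_rho a2) :
  (forall k g H1 H2, am_act (a := a1) (exist _ (k, g) H1) = am_act (a := a2) (exist _ (k, g) H2)) ->
  a1 = a2.
Proof.
case: a1 a2 E => [r1 f1 c1 d1 e1 g1 h1 i1 j1] [r2 f2 c2 d2 e2 g2 h2 i2 j2] /= Er Ef.
subst r2.
have Ef' : f1 = f2 by apply: funext => -[[k g] Hk]; apply: Ef.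
subst f2; congr AlgMorph; apply: Prop_irrelevance.
Qed.

Unset Implicit Arguments.

Theorem theorem4p11 (S : invSG) (G : gpd) :
  is_top_groupoid G -> etale G ->
  (forall a : alg_morph (germ_gpd S) G,
      exists! theta : S -> set (gArr G), is_bis_hom theta /\ corresponds a theta) /\
  (forall theta : S -> set (gArr G), is_bis_hom theta ->
      exists! a : alg_morph (germ_gpd S) G, corresponds a theta).
Proof.
move=> HG HE; split.
- move=> a; exists (thetaA a); split.
    by split; [exact: (thetaA_hom HG a HE) | move=> s g].
  move=> th [_ Hc]; apply: funext => s; apply: funext => g; apply: propext.
  by split => H; [exact: (Hc s g).2 H | exact: (Hc s g).1 H].
- move=> th Hth; exists (amB HG Hth); split; first exact: amB_corr.
  move=> a' Ha'; apply: alg_morph_ext.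
    by apply: funext => g; symmetry; exact: (corr_rho HG Hth Ha' g).
  by move=> k g H1 H2; rewrite (corr_act HG Hth Ha').
Qed.
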